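(* Let $f:\mathbb{Z}_+^E\to\mathbb{R}_{\ge0}$ be non-negative and DR-submodular, accessible through a value oracle, $|E|=n$, $k$ a positive integer and $\alpha\in(0,1)$ a constant. The output $\mathbf{z}$ of Algorithm FastDrSub$(f,E,k,\alpha)$ is feasible for the DrSMC problem and satisfies $$f(\mathbf{z})\ge\frac{1}{8\frac{2-\alpha}{1-\alpha}+\frac{1}{\alpha}}\,\mathsf{opt},$$ and the algorithm uses $O(n\log k)$ oracle queries. In particular, for $\alpha=\frac{2\sqrt2-1}{7}$ the ratio equals $\frac{1}{17+4\sqrt2}\approx0.044$.
   Context: Notation: $E$ is a finite ground set of size $n$; $\mathbf{1}_e$ is the $e$-th unit vector; $\mathbf{x}\le\mathbf{y}$ is coordinatewise; $\|\mathbf{x}\|_1=\sum_{e}\mathbf{x}(e)$; $f(\mathbf{a}\mid\mathbf{b}):=f(\mathbf{a}+\mathbf{b})-f(\mathbf{b})$. $f$ is DR-submodular if $f(\mathbf{x}+\mathbf{1}_e)-f(\mathbf{x})\ge f(\mathbf{y}+\mathbf{1}_e)-f(\mathbf{y})$ for all $\mathbf{x}\le\mathbf{y}$ and $e\in E$. A query is one evaluation of $f$. DrSMC problem: maximize $f(\mathbf{x})$ over $\mathbf{x}\in\mathbb{Z}_+^E$ subject to $\|\mathbf{x}\|_1\le k$ and $\mathbf{0}\le\mathbf{x}\le k\cdot\mathbf{1}$; $\mathsf{opt}$ denotes its optimal value. Algorithm FastDrSub$(f,E,k,\alpha)$ (elements of $E$ are processed in a fixed order): 1. Compute $(d_{\max},e_{\max})\in\arg\max\{f(d\mathbf{1}_e):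 e\in E,\ d\in\mathbb{Z},\ \alpha k<d\le k\}$. 2. Set $\mathbf{x}\leftarrow\mathbf{0}$, $\mathbf{y}\leftarrow\mathbf{0}$. 3. For each $e\in E$ in order: let $d_{(\mathbf{x},e)}=\max\{d\in\mathbb{Z}: 0<d\le\alpha k,\ f(\mathbf{1}_e\mid\mathbf{x}+(d-1)\mathbf{1}_e)\ge f(\mathbf{x})/k\}$ and $d_{(\mathbf{y},e)}=\max\{d\in\mathbb{Z}: 0<d\le\alpha k,\ f(\mathbf{1}_e\mid\mathbf{y}+(d-1)\mathbf{1}_e)\ge f(\mathbf{y})/k\}$ (each computed by binary search on $d$, and taken to be $0$ if the set is empty). If $f(d_{(\mathbf{x},e)}\mathbf{1}_e\mid\mathbf{x})\ge f(d_{(\mathbf{y},e)}\mathbf{1}_e\mid\mathbf{y})$, set $\mathbf{x}\leftarrow\mathbf{x}+d_{(\mathbf{x},e)}\mathbf{1}_e$; otherwise set $\mathbf{y}\leftarrow\mathbf{y}+d_{(\mathbf{y},e)}\mathbf{1}_e$. 4. (Trimming) Let $e_1,e_2,\dots$ be the elements of $\{e:\mathbf{x}(e)>0\}$ listed in reverse order of their addition to $\mathbf{x}$ (most recent first) and $\mathbf{x}_t=\sum_{i=1}^t\mathbf{x}(e_i)\mathbf{1}_{e_i}$; let $\mathbf{x}'=\mathbf{x}_t$ for the largest $t$ with $\|\mathbf{x}_t\|_1\le k$. Define $\mathbf{y}'$ from $\mathbf{y}$ in the same way. 5. Return $\mathbf{z}\in\arg\max\{f(\mathbf{t}):\mathbf{t}\in\{\mathbf{x}',\mathbf{y}',d_{\max}\mathbf{1}_{e_{\max}}\}\}$.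 *)

(* Defs.v *)
From HB Require Import structures.
From mathcomp Require Import all_boot all_order all_algebra.
From mathcomp Require Import reals.
Set Implicit Arguments. Unset Strict Implicit. Unset Printing Implicit Defensive.
Import Order.TTheory GRing.Theory Num.Theory.
Local Open Scope ring_scope.

(** Ground set E = 'I_n, processed in the order 0, 1, ..., n-1.
    Integer vectors x in Z_+^E are finite functions 'I_n -> nat. *)
Definition vec (n : nat) := {ffun 'I_n -> nat}.

Definition uvec n (e : 'I_n) (d : nat) : vec n :=
  [ffun i => if i == e then d else 0%N].
Definition vadd n (x y : vec n) : vec n := [ffun i => (x i + y i)%N].
Definition norm1 n (x : vec n) : nat := (\sum_(i < n) x i)%N.
Definition vle n (x y : vec n) : Prop := forall i, (x i <= y i)%N.

Definition DR_submodular (R : realType) n (f : vec n -> R) : Prop :=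
  forall (x y : vec n) (e : 'I_n), vle x y ->
    f (vadd y (uvec e 1)) - f y <= f (vadd x (uvec e 1)) - f x.

Definition feasible n (k : nat) (x : vec n) : Prop :=
  (norm1 x <= k)%N /\ (forall i, (x i <= k)%N).

(** ---------- Value-oracle query model ----------
    A program that may query the oracle at points of V (receiving values in R)
    and finally returns an A.  [qrun f p] executes it against the oracle f and
    returns the result together with the number of queries made. *)
Inductive qprog (V R A : Type) : Type :=
| QRet : A -> qprog V R A
| QAsk : V -> (R -> qprog V R A) -> qprog V R A.
Arguments QRet {V R A}.
Arguments QAsk {V R A}.

Fixpoint qbind V R A B (p : qprog V R A) (g : A -> qprog V R B) : qprog V R B :=
  match p with
  | QRet a => g a
  | QAsk v c => QAsk v (fun r => qbind (c r) g)
  end.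

Fixpoint qrun V R A (f : V -> R) (p : qprog V R A) : A * nat :=
  match p with
  | QRet a => (a, 0%N)
  | QAsk v c => let r := qrun f (c (f v)) in (r.1, r.2.+1)
  end.

Definition query {V R : Type} (v : V) : qprog V R R := QAsk v QRet.

Fixpoint qfoldl V R S T (step : S -> T -> qprog V R S) (st : S) (s : seq T)
  : qprog V R S :=
  match s with
  | [::] => QRet st
  | t :: s' => qbind (step st t) (fun st' => qfoldl step st' s')
  end.

(** Binary search: the largest d in (lo, hi] with P d (P assumed to be
    true-then-false on this range), or lo if there is none.
    Each round halves the range; the fuel hi - lo is never exhausted. *)
Fixpoint bsearch V R (P : nat -> qprog V R bool) (fuel lo hi : nat)
  : qprog V R nat :=
  match fuel with
  | 0 => QRet lo
  | fuel'.+1 =>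
    if (hi <= lo)%N then QRet lo else
    let mid := (lo + hi).+1./2 in
    qbind (P mid) (fun b =>
      if b then bsearch P fuel' mid hi else bsearch P fuel' lo mid.-1)
  end.

Definition bsearch_top V R (P : nat -> qprog V R bool) (lo hi : nat) :=
  bsearch P (hi - lo) lo hi.

Section FastDrSub.
Variables (R : realType) (n k : nat) (alpha : R).
Local Notation V := (vec n).
Local Notation Q := (qprog V R).

(** floor(alpha k): d <= alpha k  <->  d <= m ;  alpha k < d  <->  m < d *)
Definition m_alpha : nat := Num.truncn (alpha * k%:R).

(** Step 1, for a fixed e: a maximiser of d |-> f(d 1_e) over alpha k < d <= k.
    Since f(. 1_e) is concave (DR-submodularity), this is the largest d in
    (m+1, k] whose marginal f(d 1_e) - f((d-1) 1_e) is >= 0, or m+1. *)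
Definition best_d (e : 'I_n) : Q nat :=
  bsearch_top (fun d =>
      qbind (query (uvec e d)) (fun a =>
      qbind (query (uvec e d.-1)) (fun b => QRet (0 <= a - b))))
    m_alpha.+1 k.

Definition step1 : Q (option (R * nat * 'I_n)) :=
  qfoldl (fun (best : option (R * nat * 'I_n)) e =>
      qbind (best_d e) (fun d =>
      qbind (query (uvec e d)) (fun v =>
        QRet (match best with
              | None => Some (v, d, e)
              | Some (bv, bd, be) =>
                  if bv < v then Some (v, d, e) else Some (bv, bd, be)
              end))))
    None (enum 'I_n).

(** d_(x,e) = max{ d : 0 < d <= alpha k, f(1_e | x + (d-1)1_e) >= f(x)/k }, or 0. *)
Definition d_of (x : V) (e : 'I_n) : Q nat :=
  qbind (query x) (fun fx =>
  bsearch_top (fun d =>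
      qbind (query (vadd x (uvec e d))) (fun a =>
      qbind (query (vadd x (uvec e d.-1))) (fun b =>
        QRet (fx / k%:R <= a - b))))
    0 m_alpha).

(** Step 3 state: (x, y, elements added to x in order, elements added to y). *)
Definition state := (V * V * seq 'I_n * seq 'I_n)%type.

Definition step3 (st : state) (e : 'I_n) : Q state :=
  let: (x, y, lx, ly) := st in
  qbind (d_of x e) (fun dx =>
  qbind (d_of y e) (fun dy =>
  qbind (query (vadd x (uvec e dx))) (fun gx =>
  qbind (query x) (fun fx =>
  qbind (query (vadd y (uvec e dy))) (fun gy =>
  qbind (query y) (fun fy =>
    if gy - fy <= gx - fx then
      QRet (vadd x (uvec e dx), y, (if (0 < dx)%N then rcons lx e else lx), ly)
    else
      QRet (x, vadd y (uvec e dy), lx, (if (0 < dy)%N then rcons ly e else ly)))))))).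

(** Step 4: with e_1, e_2, ... the elements added, most recent first,
    x_t = sum_{i <= t} x(e_i) 1_{e_i}, and x' = x_t for the largest t with
    ||x_t||_1 <= k. *)
Definition xpref (x : V) (l : seq 'I_n) (t : nat) : V :=
  [ffun i => if i \in take t (rev l) then x i else 0%N].
Definition trim (x : V) (l : seq 'I_n) : V :=
  xpref x l (\max_(t < (size l).+1 | (norm1 (xpref x l t) <= k)%N) t)%N.

Definition pick_best (cur : V) (cands : seq V) : Q V :=
  qbind (query cur) (fun fc =>
  qbind (qfoldl (fun (b : V * R) c =>
          qbind (query c) (fun fcv => QRet (if b.2 < fcv then (c, fcv) else b)))
        (cur, fc) cands)
  (fun b => QRet b.1)).

Definition FastDrSub : Q V :=
  qbind step1 (fun best =>
  qbind (qfoldl step3 (0 : V, 0 : V, [::], [::]) (enum 'I_n)) (fun st =>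
    let: (x, y, lx, ly) := st in
    let x' := trim x lx in
    let y' := trim y ly in
    pick_best x' (y' :: match best with
                       | None => [::]
                       | Some (_, d, e) => [:: uvec e d]
                       end))).

End FastDrSub.

(* Main.v *)
Require Import Defs.
From HB Require Import structures.
From mathcomp Require Import all_boot all_order all_algebra.
From mathcomp Require Import reals.
From mathcomp Require Import zify ring lra.
Import Order.TTheory GRing.Theory Num.Theory.
Local Open Scope ring_scope.
Set Implicit Arguments. Unset Strict Implicit. Unset Printing Implicit Defensive.

Section Vecs.
Variable n : nat.
Implicit Types (x y v w : vec n) (e i : 'I_n).

Lemma vaddE x y i : vadd x y i = (x i + y i)%N. Proof. by rewrite ffunE. Qed.
Lemma uvecE e d i : uvec e d i = (if i == e then d else 0)%N. Proof. by rewrite ffunE. Qed.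
Lemma zeroE i : (0 : vec n) i = 0%N. Proof. by rewrite ffunE. Qed.

Lemma vaddA x y w : vadd (vadd x y) w = vadd x (vadd y w).
Proof. by apply/ffunP=> i; rewrite !vaddE addnA. Qed.
Lemma vaddC x y : vadd x y = vadd y x.
Proof. by apply/ffunP=> i; rewrite !vaddE addnC. Qed.
Lemma vadd0 x : vadd x 0 = x.
Proof. by apply/ffunP=> i; rewrite vaddE zeroE addn0. Qed.
Lemma vadd0l x : vadd 0 x = x.
Proof. by rewrite vaddC vadd0. Qed.
Lemma uvec0 e : uvec e 0 = 0.
Proof. by apply/ffunP=> i; rewrite uvecE zeroE; case: ifP. Qed.
Lemma uvecD e a b : uvec e (a + b) = vadd (uvec e a) (uvec e b).
Proof. by apply/ffunP=> i; rewrite vaddE !uvecE; case: ifP. Qed.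
Lemma vadd_uvec0 x e : vadd x (uvec e 0) = x.
Proof. by rewrite uvec0 vadd0. Qed.
Lemma vadd_uvecS x e d :
  vadd x (uvec e d.+1) = vadd (vadd x (uvec e d)) (uvec e 1).
Proof. by rewrite vaddA -uvecD addn1. Qed.

Lemma norm1D x y : norm1 (vadd x y) = (norm1 x + norm1 y)%N.
Proof. rewrite /norm1 -big_split /=; apply: eq_bigr => i _; by rewrite vaddE. Qed.
Lemma norm1_uvec e d : norm1 (uvec e d) = d.
Proof.
rewrite /norm1 (bigD1 e) //= big1 ?addn0 ?uvecE ?eqxx // => i /negbTE ie.
by rewrite uvecE ie.
Qed.
Lemma norm1_0 : norm1 (0 : vec n) = 0%N.
Proof. by rewrite /norm1 big1 // => i _; rewrite zeroE. Qed.
Lemma le_norm1 x i : (x i <= norm1 x)%N.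
Proof. by rewrite /norm1 (bigD1 i) //= leq_addr. Qed.

Lemma vle_refl x : vle x x. Proof. by []. Qed.
Lemma vle_trans x y w : vle x y -> vle y w -> vle x w.
Proof. by move=> h1 h2 i; apply: leq_trans (h1 i) (h2 i). Qed.
Lemma vle_addr x v : vle x (vadd x v).
Proof. by move=> i; rewrite vaddE leq_addr. Qed.
Lemma vle_add2r x y v : vle x y -> vle (vadd x v) (vadd y v).
Proof. by move=> h i; rewrite !vaddE leq_add2r. Qed.

Definition vsub x y : vec n := [ffun i => (x i - y i)%N].
Lemma vadd_sub x y : vle x y -> vadd x (vsub y x) = y.
Proof. by move=> h; apply/ffunP=> i; rewrite vaddE ffunE subnKC. Qed.

Lemma vec_ind (P : vec n -> Prop) :
  P 0 -> (forall v e, P v -> P (vadd v (uvec e 1))) -> forall v, P v.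
Proof.
move=> P0 PS v; move: {2}(norm1 v) (leqnn (norm1 v)) => N; elim: N v => [|N IH] v hv.
  suff -> : v = 0 by [].
  apply/ffunP=> i; rewrite zeroE; apply/eqP; rewrite -leqn0.
  by apply: leq_trans (le_norm1 v i) hv.
case: (pickP (fun i => 0 < v i)%N) => [e he|h0].
  pose v' : vec n := [ffun i => (v i - (i == e))%N].
  have -> : v = vadd v' (uvec e 1).
    apply/ffunP=> i; rewrite vaddE uvecE ffunE.
    by case: eqP => [->|_]; rewrite ?subn0 ?addn0 // subnK.
  apply: PS; apply: IH.
  have : norm1 (vadd v' (uvec e 1)) = norm1 v.
    congr norm1; apply/ffunP=> i; rewrite vaddE uvecE ffunE.
    by case: eqP => [->|_]; rewrite ?subn0 ?addn0 // subnK.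
  by rewrite norm1D norm1_uvec => hh; move: hv; rewrite -hh addn1 ltnS.
suff -> : v = 0 by [].
by apply/ffunP=> i; rewrite zeroE; move: (h0 i) => /= /negbT; rewrite lt0n negbK => /eqP.
Qed.

End Vecs.

Section Fun.
Variables (R : realType) (n : nat) (f : vec n -> R).
Hypothesis f_ge0 : forall x, 0 <= f x.
Hypothesis fDR : DR_submodular f.
Implicit Types (x y v w z : vec n) (e i : 'I_n).

Lemma line_DR z e j j' : (j <= j')%N ->
  f (vadd z (uvec e j'.+1)) - f (vadd z (uvec e j'))
  <= f (vadd z (uvec e j.+1)) - f (vadd z (uvec e j)).
Proof.
move=> h; rewrite (vadd_uvecS z e j') (vadd_uvecS z e j); apply: fDR.
by move=> i; rewrite !vaddE leq_add2l !uvecE; case: ifP.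
Qed.

Lemma line_lb z e c r :
  (forall j, (j < r)%N -> c <= f (vadd z (uvec e j.+1)) - f (vadd z (uvec e j))) ->
  r%:R * c <= f (vadd z (uvec e r)) - f z.
Proof.
elim: r => [|r IH] h; first by rewrite vadd_uvec0 mul0r subrr.
have h1 := h r (ltnSn r).
have h2 := IH (fun j hj => h j (ltnW hj)).
rewrite mulrSr mulrDl mul1r; lra.
Qed.

Lemma line_ub z e c r :
  (forall j, (j < r)%N -> f (vadd z (uvec e j.+1)) - f (vadd z (uvec e j)) <= c) ->
  f (vadd z (uvec e r)) - f z <= r%:R * c.
Proof.
elim: r => [|r IH] h; first by rewrite vadd_uvec0 mul0r subrr.
have h1 := h r (ltnSn r).
have h2 := IH (fun j hj => h j (ltnW hj)).
rewrite mulrSr mulrDl mul1r; lra.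
Qed.

Lemma mono1 x e : f x <= f (vadd x (uvec e 1)).
Proof.
rewrite leNgt; apply/negP => hlt.
set c := f x - f (vadd x (uvec e 1)).
have cpos : 0 < c by rewrite /c subr_gt0.
pose t := Num.Def.archi_bound (f x / c).
have ht : f x / c < t%:R by apply: archi_boundP; rewrite divr_ge0 // ltW.
have : f (vadd x (uvec e t)) - f x <= t%:R * - c.
  apply: (line_ub (z:=x) (e:=e) (c:=-c) (r:=t)) => j _.
  have := fDR e (vle_addr x (uvec e j)).
  rewrite -vadd_uvecS /c; lra.
have := f_ge0 (vadd x (uvec e t)).
have : f x < t%:R * c by rewrite -ltr_pdivrMr.
lra.
Qed.

Lemma mono_add x v : f x <= f (vadd x v).
Proof.
elim/vec_ind: v x => [|v e IH] x; first by rewrite vadd0.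
rewrite -vaddA; apply: le_trans (IH x) _; exact: mono1.
Qed.

Lemma mono x y : vle x y -> f x <= f y.
Proof. by move=> h; rewrite -(vadd_sub h); apply: mono_add. Qed.

Lemma DRvec x y v : vle y x -> f (vadd x v) - f x <= f (vadd y v) - f y.
Proof.
elim/vec_ind: v x y => [|v e IH] x y h; first by rewrite !vadd0 !subrr.
rewrite -!vaddA.
have h1 := IH x y h.
have h2 := fDR e (vle_add2r v h).
lra.
Qed.

Lemma subadd x y : f (vadd x y) <= f x + f y - f 0.
Proof.
have h0 : vle 0 x by move=> i; rewrite zeroE.
have := DRvec y h0. rewrite vadd0l; lra. Qed.

Definition vr (v : vec n) (s : seq 'I_n) : vec n :=
  [ffun i => if i \in s then v i else 0%N].

Lemma subadd_seq x v s : uniq s ->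
  f (vadd x (vr v s)) - f x <= \sum_(i <- s) (f (vadd x (uvec i (v i))) - f x).
Proof.
elim: s => [|a s IH] /=.
  move=> _; rewrite big_nil.
  suff -> : vr v [::] = 0 by rewrite vadd0 subrr.
  by apply/ffunP=> i; rewrite !ffunE.
move=> /andP [as_ us]; rewrite big_cons.
have -> : vr v (a :: s) = vadd (vr v s) (uvec a (v a)).
  apply/ffunP=> i; rewrite vaddE uvecE !ffunE in_cons.
  case: eqP => [->|_] /=; last by rewrite addn0.
  by rewrite (negbTE as_).
rewrite -vaddA.
have h1 := IH us.
have h2 := DRvec (uvec a (v a)) (vle_addr x (vr v s)).
lra.
Qed.

Lemma subadd_sum x v :
  f (vadd x v) - f x <= \sum_(i < n) (f (vadd x (uvec i (v i))) - f x).
Proof.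
have := subadd_seq x v (index_enum_uniq _).
suff -> : vr v (index_enum 'I_n) = v by [].
by apply/ffunP=> i; rewrite ffunE mem_index_enum.
Qed.

End Fun.

Section Q.
Variables (V R : Type) (f : V -> R).

Lemma qrun_bind A B (p : qprog V R A) (g : A -> qprog V R B) :
  qrun f (qbind p g) =
  ((qrun f (g (qrun f p).1)).1, ((qrun f p).2 + (qrun f (g (qrun f p).1)).2)%N).
Proof.
elim: p => [a|v c IH] /=; first by case: (qrun f (g a)).
by rewrite IH.
Qed.

Lemma qrun_if A (c : bool) (a b : A) :
  qrun f (if c then QRet a else QRet b) = (if c then a else b, 0%N).
Proof. by case: c. Qed.

Variable P : nat -> qprog V R bool.
Local Notation b d := (qrun f (P d)).1.

Lemma bsearch_spec lo0 hi0 fuel : forall lo hi,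
  (lo0 <= lo)%N -> (lo <= hi)%N -> (hi <= hi0)%N -> (hi - lo <= fuel)%N ->
  (lo = lo0 \/ b lo) -> (hi = hi0 \/ ~~ b hi.+1) ->
  let r := (qrun f (bsearch P fuel lo hi)).1 in
  [/\ (lo0 <= r)%N, (r <= hi0)%N, (r = lo0 \/ b r) & (r = hi0 \/ ~~ b r.+1)].
Proof.
elim: fuel => [|fuel IH] lo hi h1 h2 h3 h4 h5 h6 /=.
  have E : hi = lo by lia.
  subst hi; split => //; lia.
case: ifP => hl.
  have E : hi = lo by lia.
  subst hi; split => //; lia.
rewrite qrun_bind.
set mid := (lo + hi).+1./2.
have hm1 : (lo < mid)%N by rewrite /mid -divn2; lia.
have hm2 : (mid <= hi)%N by rewrite /mid -divn2; lia.
case hb: (b mid).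
  apply: IH => //; try lia; by right.
apply: IH => //; try lia.
right; rewrite prednK ?hb //; lia.
Qed.

Lemma bsearch_cnt (HP : forall d, ((qrun f (P d)).2 <= 2)%N) j : forall fuel lo hi,
  (hi - lo < 2 ^ j)%N -> ((qrun f (bsearch P fuel lo hi)).2 <= 2 * j)%N.
Proof.
elim: j => [|j IH] [|fuel] lo hi h //=.
  by rewrite expn0 in h; have -> : (hi <= lo)%N by lia.
case: ifP => // hl.
rewrite qrun_bind /=.
have hmid : uphalf (lo+hi) = ((lo+hi).+1 %/ 2)%N by rewrite uphalfE divn2.
rewrite hmid.
have e2 : (2 ^ j.+1 = 2 * 2 ^ j)%N by rewrite expnS.
have := HP ((lo+hi).+1 %/ 2)%N.
case: (b _) => hp.
  have := IH fuel ((lo+hi).+1 %/ 2)%N hi.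
  move=> H; have := H ltac:(lia); lia.
have := IH fuel lo ((lo+hi).+1 %/ 2)%N.-1.
move=> H; have := H ltac:(lia); lia.
Qed.

End Q.

Section Alg.
Variables (R : realType) (n k : nat) (alpha : R) (f : vec n -> R).
Hypothesis f_ge0 : forall x, 0 <= f x.
Hypothesis fDR : DR_submodular f.
Hypothesis kpos : (0 < k)%N.
Hypothesis a0 : 0 < alpha.
Hypothesis a1 : alpha < 1.
Implicit Types (x y v w z : vec n) (e i : 'I_n).

Local Notation m := (m_alpha k alpha).
Local Notation J := (trunc_log 2 k).+1.

Lemma ak_ge0 : 0 <= alpha * k%:R.
Proof. by rewrite mulr_ge0 // ltW. Qed.

Lemma m_le : (m%:R : R) <= alpha * k%:R.
Proof. by rewrite /m_alpha truncn_le ak_ge0. Qed.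

Lemma m_gt : alpha * k%:R < (m.+1)%:R.
Proof. exact: truncnS_gt. Qed.

Lemma m_lt_k : (m < k)%N.
Proof.
rewrite /m_alpha truncn_lt_nat ?ak_ge0 //.
have h : 0 < (1 - alpha) * k%:R by rewrite mulr_gt0 ?ltr0n // subr_gt0.
rewrite mulrBl mul1r in h; lra.
Qed.

Lemma k_lt_J : (k < 2 ^ J)%N.
Proof. exact: trunc_log_ltn. Qed.

Lemma gain_lb x e r c :
  (r = 0%N \/ c <= f (vadd x (uvec e r)) - f (vadd x (uvec e r.-1))) ->
  r%:R * c <= f (vadd x (uvec e r)) - f x.
Proof.
case=> [->|h]; first by rewrite vadd_uvec0 mul0r subrr.
case: r h => [|r] h; first by rewrite vadd_uvec0 mul0r subrr.
apply: line_lb => j hj.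
apply: le_trans h _.
exact: line_DR.
Qed.

Lemma gain_ub x w e r s c : vle x w -> (s <= m)%N ->
  (r = m \/ f (vadd x (uvec e r.+1)) - f (vadd x (uvec e r)) < c) ->
  f (vadd w (uvec e (maxn r s))) - f w
  <= (f (vadd x (uvec e r)) - f x) + (s - r)%:R * c.
Proof.
move=> hxw hs hr.
case: (leqP s r) => hsr.
  have -> : (s - r = 0)%N by apply/eqP; rewrite subn_eq0.
  by rewrite mul0r addr0; apply: DRvec.
have hr' : f (vadd x (uvec e r.+1)) - f (vadd x (uvec e r)) < c.
  by case: hr => // hrm; lia.
have h1 : f (vadd w (uvec e r)) - f w <= f (vadd x (uvec e r)) - f x by apply: DRvec.
have h2 : f (vadd w (uvec e s)) - f (vadd w (uvec e r)) <= (s - r)%:R * c.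
  have -> : vadd w (uvec e s) = vadd (vadd w (uvec e r)) (uvec e (s - r)).
    by rewrite vaddA -uvecD subnKC // ltnW.
  apply: line_ub => j hj.
  rewrite !vaddA -!uvecD.
  apply: le_trans (ltW hr').
  apply: le_trans (line_DR fDR x e (leq_addr j r)).
  rewrite addnS (vadd_uvecS w) (vadd_uvecS x).
  apply: fDR => i; rewrite !vaddE leq_add2r; exact: hxw.
lra.
Qed.


Lemma best_d_spec e :
  (qrun f (best_d k alpha e)).1 = k /\ ((qrun f (best_d k alpha e)).2 <= 2 * J)%N.
Proof.
rewrite /best_d /bsearch_top.
have hmk := m_lt_k.
split.
  have := bsearch_spec (f := f)
    (P := fun d : nat => qbind (query (uvec e d)) (fun a =>
          qbind (query (uvec e d.-1)) (fun b => QRet (0 <= a - b))))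
    (lo0 := m.+1) (hi0 := k) (fuel := (k - m.+1)%N) (lo := m.+1) (hi := k).
  move=> /(_ (leqnn _) hmk (leqnn _) (leqnn _) (or_introl erefl) (or_introl erefl)).
  case=> _ _ _ [//|] /=.
  rewrite subr_ge0 (mono f_ge0 fDR) //.
  by move=> i; rewrite !uvecE; case: ifP.
apply: bsearch_cnt => [d //|].
have := k_lt_J; lia.
Qed.

Lemma dof_spec x e :
  let r := (qrun f (d_of k alpha x e)).1 in
  [/\ (r <= m)%N,
      (r = 0%N \/ f x / k%:R <= f (vadd x (uvec e r)) - f (vadd x (uvec e r.-1))),
      (r = m \/ f (vadd x (uvec e r.+1)) - f (vadd x (uvec e r)) < f x / k%:R)
    & ((qrun f (d_of k alpha x e)).2 <= (2 * J).+1)%N].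
Proof.
rewrite /d_of /bsearch_top /=.
have hmk := m_lt_k.
have := bsearch_spec (f := f)
    (P := fun d : nat => qbind (query (vadd x (uvec e d))) (fun a =>
          qbind (query (vadd x (uvec e d.-1))) (fun b => QRet (f x / k%:R <= a - b))))
    (lo0 := 0%N) (hi0 := m) (fuel := (m - 0)%N) (lo := 0%N) (hi := m).
move=> /(_ (leqnn _) (leq0n _) (leqnn _) (leqnn _) (or_introl erefl) (or_introl erefl)).
case=> _ h1 h2 h3; split.
- exact: h1.
- case: h2 => [->|/= h2]; [by left | by right].
- case: h3 => [->|/= h3]; [by left | right; rewrite ltNge; exact: h3].
rewrite ltnS; apply: bsearch_cnt => [d //|].
have := k_lt_J; lia.
Qed.

End Alg.

Section Chain.
Variables (R : realType) (n k : nat) (alpha : R) (f : vec n -> R).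
Hypothesis f_ge0 : forall x, 0 <= f x.
Hypothesis fDR : DR_submodular f.
Hypothesis kpos : (0 < k)%N.
Hypothesis a0 : 0 < alpha.
Hypothesis a1 : alpha < 1.
Implicit Types (x y v w z : vec n) (e i : 'I_n) (l : seq 'I_n).

Local Notation m := (m_alpha k alpha).

Definition xsuf x l t : vec n := [ffun i => if i \in take t (rev l) then 0%N else x i].

Definition chain_ok x l :=
  [/\ forall i, (x i <= m)%N, forall i, i \notin l -> x i = 0%N &
      forall t, (norm1 (xpref x l t))%:R * f (xsuf x l t) <= k%:R * f (xpref x l t)].

Lemma xpref_suf x l t : vadd (xpref x l t) (xsuf x l t) = x.
Proof. by apply/ffunP=> i; rewrite vaddE !ffunE; case: ifP; rewrite ?addn0. Qed.

Lemma xpref_le x l t : vle (xpref x l t) x.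
Proof. by move=> i; rewrite ffunE; case: ifP. Qed.
Lemma xsuf_le x l t : vle (xsuf x l t) x.
Proof. by move=> i; rewrite ffunE; case: ifP. Qed.

Lemma xpref0 x l : xpref x l 0 = 0.
Proof. by apply/ffunP=> i; rewrite !ffunE take0. Qed.

Lemma kR_gt0 : (0 : R) < k%:R. Proof. by rewrite ltr0n. Qed.

Lemma chain_nil : chain_ok 0 [::].
Proof.
split => [i|i _|t]; rewrite ?zeroE //.
have -> : xpref (0 : vec n) [::] t = 0 by apply/ffunP=> i; rewrite !ffunE; case: (_ \in _).
by rewrite norm1_0 mul0r; apply: mulr_ge0 => //; apply: ltW; exact: kR_gt0.
Qed.

Lemma chain_step x l e d : chain_ok x l -> e \notin l -> x e = 0%N -> (d <= m)%N ->
  d%:R * (f x / k%:R) <= f (vadd x (uvec e d)) - f x ->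
  chain_ok (vadd x (uvec e d)) (if (0 < d)%N then rcons l e else l).
Proof.
move=> [c1 c2 c3] el xe dm hg.
case: (posnP d) => [->|dpos]; first by rewrite vadd_uvec0.
have enot : forall t, e \notin take t (rev l).
  by move=> t; apply/negP => /mem_take; rewrite mem_rev; apply/negP.
split.
- move=> i; rewrite vaddE uvecE; case: eqP => [->|_]; first by rewrite xe.
  by rewrite addn0.
- move=> i; rewrite mem_rcons in_cons negb_or => /andP [ie il].
  by rewrite vaddE uvecE (negbTE ie) addn0 c2.
case=> [|t].
  by rewrite xpref0 norm1_0 mul0r; apply: mulr_ge0 => //; apply: ltW; exact: kR_gt0.
have EP : xpref (vadd x (uvec e d)) (rcons l e) t.+1 = vadd (xpref x l t) (uvec e d).
  apply/ffunP=> i; rewrite vaddE !ffunE rev_rcons /= in_cons.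
  case: eqP => [->|_] /=; first by rewrite (negbTE (enot t)) xe.
  by rewrite !addn0.
have ES : xsuf (vadd x (uvec e d)) (rcons l e) t.+1 = xsuf x l t.
  apply/ffunP=> i; rewrite !ffunE rev_rcons /= in_cons.
  case: eqP => [->|_] /=; first by rewrite (negbTE (enot t)) xe.
  by rewrite addn0.
rewrite EP ES norm1D norm1_uvec natrD.
set P := xpref x l t; set S := xsuf x l t.
have h1 := c3 t; rewrite -/P -/S in h1.
have h2 : f (vadd x (uvec e d)) - f x <= f (vadd P (uvec e d)) - f P.
  exact: (DRvec fDR (uvec e d) (xpref_le x l t)).
have h3 : f S <= f x by apply: (mono f_ge0 fDR (xsuf_le x l t)).
have hk := kR_gt0.
have hq : k%:R * (f x / k%:R) = f x by rewrite mulrC divfK // gt_eqF.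
have h4 : k%:R * (d%:R * (f x / k%:R)) <= k%:R * (f (vadd P (uvec e d)) - f P).
  by rewrite ler_pM2l //; lra.
rewrite mulrCA hq in h4.
have h5 : d%:R * f S <= d%:R * f x by rewrite ler_wpM2l.
rewrite mulrDl; lra.
Qed.

Lemma norm_xprefS x l t : (forall i, (x i <= m)%N) ->
  (norm1 (xpref x l t.+1) <= norm1 (xpref x l t) + m)%N.
Proof.
move=> hm.
case: (ltnP t (size (rev l))) => ht; last first.
  have -> : xpref x l t.+1 = xpref x l t.
    by apply/ffunP=> i; rewrite !ffunE !take_oversize // leqW.
  exact: leq_addr.
case E: (rev l) ht => [|d0 s] ht //.
have Htk := take_nth d0 ht.
set a := nth d0 (d0 :: s) t.
have H : forall i, (xpref x l t.+1 i <= vadd (xpref x l t) (uvec a m) i)%N.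
  move=> i; rewrite vaddE !ffunE E Htk mem_rcons in_cons.
  case: eqP => [->|_] /=; last by rewrite addn0.
  case: ifP => _; [exact: leq_addr | rewrite add0n; exact: hm].
apply: leq_trans (_ : norm1 (xpref x l t.+1) <= norm1 (vadd (xpref x l t) (uvec a m)))%N _.
  by rewrite /norm1; apply: leq_sum => i _.
by rewrite norm1D norm1_uvec.
Qed.

Lemma chain_final x l : chain_ok x l ->
  feasible k (trim k x l) /\ (1 - alpha) * f x <= (2 - alpha) * f (trim k x l).
Proof.
move=> [c1 c2 c3].
rewrite /trim; set T := (\max_(t < _ | _) _)%N.
have hT1 : (norm1 (xpref x l T) <= k)%N.
  rewrite /T; apply: (big_ind (fun t => norm1 (xpref x l t) <= k)%N).
  - by rewrite xpref0 norm1_0.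
  - by move=> a b ha hb; rewrite /maxn; case: ifP.
  - by move=> t.
have hT2 : (T <= size l)%N.
  rewrite /T; apply: (big_ind (fun t => t <= size l)%N) => //.
  - by move=> a b ha hb; rewrite /maxn; case: ifP.
  - by move=> t _; rewrite -ltnS; exact: ltn_ord.
split.
  split => // i; apply: leq_trans (le_norm1 _ i) hT1.
have fx0 := f_ge0 x.
case: (ltnP T (size l)) => hTl; last first.
  have -> : xpref x l T = x.
    apply/ffunP=> i; rewrite ffunE take_oversize ?size_rev // mem_rev.
    by case: ifP => // /negbT /c2 ->.
  lra.
have hnot : (k < norm1 (xpref x l T.+1))%N.
  rewrite ltnNge; apply/negP => hk.
  have H : (T.+1 <= T)%N :=
    @leq_bigmax_cond _ (fun t : 'I_(size l).+1 => (norm1 (xpref x l t) <= k)%N)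
      (fun t => nat_of_ord t) (Ordinal (hTl : T.+1 < (size l).+1)%N) hk.
  by rewrite ltnn in H.
have hN := norm_xprefS l T c1.
have h1 := c3 T.
have hsub := subadd fDR (xpref x l T) (xsuf x l T).
rewrite xpref_suf in hsub.
set P := xpref x l T in hN h1 hsub *; set S := xsuf x l T in h1 hsub.
have hNk : (k <= norm1 P + m)%N by lia.
have hNR : (k%:R : R) <= (norm1 P)%:R + m%:R by rewrite -natrD ler_nat.
have hm := m_le k a0.
have fS0 := f_ge0 S.
have f00 := f_ge0 0.
have hk := kR_gt0.
have h2 : (1 - alpha) * k%:R <= (norm1 P)%:R by rewrite mulrBl mul1r; lra.
have h3 : k%:R * ((1 - alpha) * f S) <= k%:R * f P.
  rewrite mulrA (mulrC k%:R); apply: le_trans h1.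
  by apply: ler_wpM2r.
rewrite ler_pM2l // in h3.
have h4 : (1 - alpha) * f x <= (1 - alpha) * (f P + f S).
  apply: ler_wpM2l; first by rewrite subr_ge0 ltW.
  clear -hsub f00. lra.
lra.
Qed.

End Chain.

Section Main.
Variables (R : realType) (n k : nat) (alpha : R) (f : vec n -> R).
Hypothesis f_ge0 : forall x, 0 <= f x.
Hypothesis fDR : DR_submodular f.
Hypothesis kpos : (0 < k)%N.
Hypothesis a0 : 0 < alpha.
Hypothesis a1 : alpha < 1.
Implicit Types (x y v w z o : vec n) (e i : 'I_n) (l : seq 'I_n).

Local Notation m := (m_alpha k alpha).
Local Notation J := (trunc_log 2 k).+1.

Definition vmax x o : vec n := [ffun i => maxn (x i) (o i)].
Definition vkill o e : vec n := [ffun i => if i == e then 0%N else o i].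

Lemma vmax_split x o e d : x e = 0%N ->
  vmax (vadd x (uvec e d)) o = vadd (vmax x (vkill o e)) (uvec e (maxn d (o e))).
Proof.
move=> xe; apply/ffunP=> i; rewrite !ffunE.
case: eqP => [->|_]; first by rewrite xe.
by rewrite !addn0.
Qed.

Lemma vkill_split o e : o = vadd (vkill o e) (uvec e (o e)).
Proof. by apply/ffunP=> i; rewrite !ffunE; case: eqP => [->|_]; rewrite ?addn0. Qed.

Lemma vle_vmax x o : vle x (vmax x o).
Proof. by move=> i; rewrite ffunE leq_maxl. Qed.
Lemma vle_vmaxr x o : vle o (vmax x o).
Proof. by move=> i; rewrite ffunE leq_maxr. Qed.

Definition Inv (st : state n) (s : seq 'I_n) : Prop :=
  let: (x, y, lx, ly) := st in
  [/\ chain_ok k alpha f x lx, chain_ok k alpha f y ly,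
      forall i, i \in s -> [/\ x i = 0%N, y i = 0%N, i \notin lx & i \notin ly] &
      forall o, (forall i, (o i <= m)%N) -> (forall i, i \in s -> o i = 0%N) ->
        f (vmax x o) <= f x + (norm1 o)%:R * (f x / k%:R) + f y - f 0].

Lemma kR_pos : (0 : R) < k%:R. Proof. by rewrite ltr0n. Qed.

Lemma step3_ok st e s : e \notin s -> Inv st (e :: s) ->
  Inv (qrun f (step3 k alpha st e)).1 s /\
  ((qrun f (step3 k alpha st e)).2 <= 4 * J + 6)%N.
Proof.
case: st => [[[x y] lx] ly] hes [cx cy hs ho].
have [xe0 ye0 elx ely] := hs e (mem_head e s).
rewrite /step3 qrun_bind.
have [dxm dx1 dx2 dxc] := dof_spec f kpos a0 a1 x e.
set dx := (qrun f (d_of k alpha x e)).1 in dxm dx1 dx2 *.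
set cdx := (qrun f (d_of k alpha x e)).2 in dxc *.
clearbody dx cdx.
cbv beta; rewrite qrun_bind.
have [dym dy1 dy2 dyc] := dof_spec f kpos a0 a1 y e.
set dy := (qrun f (d_of k alpha y e)).1 in dym dy1 dy2 *.
set cdy := (qrun f (d_of k alpha y e)).2 in dyc *.
clearbody dy cdy.
cbv beta.
have gx := gain_lb fDR dx1.
have gy := gain_lb fDR dy1.
have hk := kR_pos.
have fx0 := f_ge0 x.
have fy0 := f_ge0 y.
have f00 := f_ge0 0.
have q0 : 0 <= f x / k%:R by rewrite divr_ge0 // ltW.
have hcnt : (cdx + (cdy + 4) <= 4 * J + 6)%N by clear -dxc dyc; lia.
rewrite /=.
case: ifP => hc /=.
  split => //.
  rewrite /Inv; split.
  - have H := (chain_step f_ge0 fDR kpos cx elx xe0 dxm gx); exact H.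
  - exact: cy.
  - move=> i hi.
    have := hs i; rewrite in_cons hi orbT => /(_ isT) [h1 h2 h3 h4].
    have ie : i != e by apply/eqP => ie; move: hes; rewrite -ie hi.
    split => //; first by rewrite vaddE uvecE (negbTE ie) addn0.
    by case: ifP => // _; rewrite mem_rcons in_cons negb_or ie.
  move=> o om oz.
  set o' := vkill o e.
  have o'm : forall i, (o' i <= m)%N by move=> i; rewrite ffunE; case: ifP.
  have o'z : forall i, i \in e :: s -> o' i = 0%N.
    by move=> i; rewrite in_cons ffunE; case: eqP => //= _; exact: oz.
  have h1 := ho o' o'm o'z.
  rewrite vmax_split //.
  have h2 := gain_ub fDR kpos a0 a1 (vle_vmax x o') (om e) dx2.
  have hn : norm1 o = (norm1 o' + o e)%N by rewrite {1}(vkill_split o e) norm1D norm1_uvec.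
  rewrite hn natrD.
  set gx' := f (vadd x (uvec e dx)) in hc gx h2 *.
  have dq0 : 0 <= dx%:R * (f x / k%:R) by rewrite mulr_ge0.
  have hfx : f x <= gx' by lra.
  have hq : f x / k%:R <= gx' / k%:R by rewrite ler_wpM2r // invr_ge0 ltW.
  have hN' : (norm1 o')%:R * (f x / k%:R) <= (norm1 o')%:R * (gx' / k%:R).
    by rewrite ler_wpM2l.
  have he : (o e - dx)%:R * (f x / k%:R) <= (o e)%:R * (gx' / k%:R).
    apply: le_trans (_ : (o e)%:R * (f x / k%:R) <= _).
      by rewrite ler_wpM2r // ler_nat leq_subr.
    by rewrite ler_wpM2l.
  rewrite mulrDl.
  clear -h1 h2 hN' he hfx.
  lra.
move/negbT: hc; rewrite -ltNge => hc.
split => //.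
rewrite /Inv; split.
- exact: cx.
- have H := (chain_step f_ge0 fDR kpos cy ely ye0 dym gy); exact H.
- move=> i hi.
  have := hs i; rewrite in_cons hi orbT => /(_ isT) [h1 h2 h3 h4].
  have ie : i != e by apply/eqP => ie; move: hes; rewrite -ie hi.
  split => //; first by rewrite vaddE uvecE (negbTE ie) addn0.
  by case: ifP => // _; rewrite mem_rcons in_cons negb_or ie.
move=> o om oz.
set o' := vkill o e.
have o'm : forall i, (o' i <= m)%N by move=> i; rewrite ffunE; case: ifP.
have o'z : forall i, i \in e :: s -> o' i = 0%N.
  by move=> i; rewrite in_cons ffunE; case: eqP => //= _; exact: oz.
have h1 := ho o' o'm o'z.
have hsp := vmax_split o 0 xe0.
rewrite vadd_uvec0 max0n in hsp.
rewrite hsp.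
have h2 := gain_ub fDR kpos a0 a1 (vle_vmax x o') (om e) dx2.
have h3 : f (vadd (vmax x o') (uvec e (o e))) <= f (vadd (vmax x o') (uvec e (maxn dx (o e)))).
  apply: (mono f_ge0 fDR) => i; rewrite !vaddE leq_add2l !uvecE.
  by case: ifP => // _; rewrite leq_maxr.
have hn : norm1 o = (norm1 o' + o e)%N by rewrite {1}(vkill_split o e) norm1D norm1_uvec.
rewrite hn natrD.
have he : (o e - dx)%:R * (f x / k%:R) <= (o e)%:R * (f x / k%:R).
  by rewrite ler_wpM2r // ler_nat leq_subr.
rewrite mulrDl.
clear -h1 h2 h3 he hc.
lra.
Qed.

Lemma qfoldl_cons V S T (step : S -> T -> qprog V R S) st t s :
  qfoldl step st (t :: s) = qbind (step st t) (fun st' => qfoldl step st' s).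
Proof. by []. Qed.

Lemma fold3 s : forall st, uniq s -> Inv st s ->
  Inv (qrun f (qfoldl (step3 k alpha) st s)).1 [::] /\
  ((qrun f (qfoldl (step3 k alpha) st s)).2 <= size s * (4 * J + 6))%N.
Proof.
elim: s => [|e s IH] st; first by move=> _ h; split.
move=> /andP [hes us] hI.
rewrite qfoldl_cons qrun_bind.
have [h1 h2] := step3_ok hes hI.
have [h3 h4] := IH _ us h1.
split => //.
by rewrite /= mulSn; apply: leq_add.
Qed.

Lemma Inv_init : Inv (0, 0, [::], [::]) (enum 'I_n).
Proof.
split.
- exact: chain_nil.
- exact: chain_nil.
- by move=> i _; rewrite !zeroE.
move=> o _ oz.
have o0 : o = 0 by apply/ffunP=> i; rewrite zeroE oz // mem_enum.
have -> : vmax 0 o = 0 by apply/ffunP=> i; rewrite !ffunE o0 zeroE.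
rewrite o0 norm1_0 mul0r addr0.
have := f_ge0 0; lra.
Qed.

Definition step1_step (best : option (R * nat * 'I_n)) (e : 'I_n) :
    qprog (vec n) R (option (R * nat * 'I_n)) :=
  qbind (best_d k alpha e) (fun d =>
      qbind (query (uvec e d)) (fun a =>
        QRet (match best with
              | None => Some (a, d, e)
              | Some (bv, bd, be) =>
                  if bv < a then Some (a, d, e) else Some (bv, bd, be)
              end))).

Lemma step1E : step1 n k alpha = qfoldl step1_step None (enum 'I_n).
Proof. by []. Qed.

Definition I1 (best : option (R * nat * 'I_n)) (D : seq 'I_n) : Prop :=
  (forall (r : R) d e, best = Some (r, d, e) -> r = f (uvec e d) /\ (d <= k)%N) /\
  (forall e', e' \in D -> exists (r : R) d e, best = Some (r, d, e) /\ f (uvec e' k) <= r).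

Lemma I1_nil : I1 None [::].
Proof. by split. Qed.

Lemma fold1 s : forall best D, I1 best D ->
  I1 (qrun f (qfoldl step1_step best s)).1 (D ++ s) /\
  ((qrun f (qfoldl step1_step best s)).2 <= size s * (2 * J + 1))%N.
Proof.
elim: s => [|e s IH] best D hI; first by rewrite cats0.
rewrite qfoldl_cons qrun_bind.
have [hd hc] := best_d_spec f_ge0 fDR kpos a0 a1 e.
have hI' : I1 (qrun f (step1_step best e)).1 (rcons D e) /\
           ((qrun f (step1_step best e)).2 <= 2 * J + 1)%N.
  rewrite /step1_step qrun_bind hd /=.
  split; last by rewrite leq_add2r.
  case: hI => hIa hIb.
  case: best hIa hIb => [[[bv bd] be]|] hIa hIb /=.
    case: ifP => hlt.
      split; first by move=> v d e0 [<- <- <-].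
      move=> e'; rewrite mem_rcons in_cons => /orP [/eqP ->|he'].
        by exists (f (uvec e k)), k, e.
      have [v [d [e0 [[hv1 _ _] hv]]]] := hIb e' he'.
      exists (f (uvec e k)), k, e; split => //.
      by apply: le_trans hv _; rewrite -hv1 ltW.
    split; first exact: hIa.
    move=> e'; rewrite mem_rcons in_cons => /orP [/eqP ->|he'].
      exists bv, bd, be; split => //.
      by rewrite leNgt hlt.
    exact: hIb.
  split; first by move=> v d e0 [<- <- <-].
  move=> e'; rewrite mem_rcons in_cons => /orP [/eqP ->|he'].
    by exists (f (uvec e k)), k, e.
  by have [v [d [e0 [//]]]] := hIb e' he'.
case: hI' => h1 h2.
have [h3 h4] := IH _ _ h1.
rewrite cat_rcons in h3; split => //.
by rewrite /= mulSn; apply: leq_add.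
Qed.

Definition pick_step (b : vec n * R) (c : vec n) : qprog (vec n) R (vec n * R) :=
  qbind (query c) (fun fcv => QRet (if b.2 < fcv then (c, fcv) else b)).

Lemma pickE cur cands : pick_best R cur cands =
  qbind (query cur) (fun fc => qbind (qfoldl pick_step (cur, fc) cands) (fun b => QRet b.1)).
Proof. by []. Qed.

Lemma pick_fold s : forall b, b.2 = f b.1 ->
  let r := qrun f (qfoldl pick_step b s) in
  [/\ r.1.2 = f r.1.1, r.1.1 \in b.1 :: s, f b.1 <= r.1.2,
      (forall c, c \in s -> f c <= r.1.2) & r.2 = size s].
Proof.
elim: s => [|c s IH] b hb.
  by split => //=; [rewrite mem_head | rewrite hb].
have hstep : qrun f (pick_step b c) = (if b.2 < f c then (c, f c) else b, 1%N) by [].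
rewrite qfoldl_cons qrun_bind hstep /=.
set b' := (if b.2 < f c then (c, f c) else b).
have hb' : b'.2 = f b'.1 by rewrite /b'; case: ifP.
have [h1 h2 h3 h4 h5] := IH b' hb'.
have hb'1 : f b.1 <= b'.2 /\ f c <= b'.2.
  rewrite /b'; case: ifP => /= hl; first by split => //; rewrite -hb ltW.
  by rewrite -hb; split => //; rewrite leNgt hl.
split => //.
- move: h2; rewrite /b' in_cons; case: ifP => _ /=; rewrite !in_cons.
    by case/orP => ->; rewrite ?orbT.
  by case/orP => ->; rewrite ?orbT.
- case: hb'1 => hh _; rewrite hb' in hh; exact: le_trans hh h3.
- move=> c'; rewrite in_cons => /orP [/eqP ->|hc']; last exact: h4.
  case: hb'1 => _ hh; rewrite hb' in hh; exact: le_trans hh h3.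
by rewrite h5.
Qed.

Lemma pick_bestP cur cands :
  let r := qrun f (pick_best R cur cands) in
  [/\ r.1 \in cur :: cands, f cur <= f r.1,
      (forall c, c \in cands -> f c <= f r.1) & r.2 = (size cands).+1].
Proof.
rewrite pickE /= qrun_bind /=.
have [h1 h2 h3 h4 h5] := pick_fold cands (b := (cur, f cur)) erefl.
by split; rewrite -?h1 // h5 addn0.
Qed.

End Main.

Section Final.
Variables (R : realType) (n k : nat) (alpha : R) (f : vec n -> R).
Hypothesis f_ge0 : forall x, 0 <= f x.
Hypothesis fDR : DR_submodular f.
Hypothesis kpos : (0 < k)%N.
Hypothesis a0 : 0 < alpha.
Hypothesis a1 : alpha < 1.

Local Notation m := (m_alpha k alpha).
Local Notation J := (trunc_log 2 k).+1.

Lemma approx x y lx ly (best : option (R * nat * 'I_n)) z :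
  Inv k alpha f (x, y, lx, ly) [::] -> I1 k f best (enum 'I_n) ->
  f (trim k x lx) <= f z -> f (trim k y ly) <= f z ->
  (forall (r : R) d e, best = Some (r, d, e) -> f (uvec e d) <= f z) ->
  forall o : vec n, feasible k o ->
    f o / (8%:R * ((2%:R - alpha) / (1 - alpha)) + 1 / alpha) <= f z.
Proof.
move=> [cx cy _ ho] [I1a I1b] hx hy hb o [on oc].
set F := f z.
have F0 : 0 <= F := f_ge0 z.
have f00 := f_ge0 0.
have fx0 := f_ge0 x.
have fy0 := f_ge0 y.
have hk : (0 : R) < k%:R by rewrite ltr0n.
have [_ hx'] := chain_final f_ge0 fDR kpos a0 a1 cx.
have [_ hy'] := chain_final f_ge0 fDR kpos a0 a1 cy.
pose os : vec n := [ffun i => if (m < o i)%N then 0%N else o i].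
pose oL : vec n := [ffun i => if (m < o i)%N then o i else 0%N].
have hosplit : o = vadd os oL.
  by apply/ffunP=> i; rewrite !ffunE; case: ifP; rewrite ?addn0.
have hs1 : f o - f os <= f oL - f 0.
  have h0 : vle 0 os by move=> i; rewrite zeroE.
  have := DRvec fDR oL h0; rewrite vadd0l -hosplit; exact.
have hs2 : f oL - f 0 <= \sum_(i < n) (f (uvec i (oL i)) - f 0).
  have := subadd_sum fDR 0 oL; rewrite vadd0l.
  by under eq_bigr => i _ do rewrite vadd0l.
have hs3 : forall i, f (uvec i (oL i)) - f 0 <= ((m < o i)%N)%:R * F.
  move=> i; rewrite ffunE; case: ifP => hi.
    rewrite mul1r.
    have [r [d [e [hbe hv]]]] := I1b i ltac:(by rewrite mem_enum).
    have := hb _ _ _ hbe.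
    have [hv' _] := I1a _ _ _ hbe.
    have : f (uvec i (o i)) <= f (uvec i k).
      apply: (mono f_ge0 fDR) => j; rewrite !uvecE; case: ifP => // _; exact: oc.
    rewrite hv' in hv; rewrite -/F; lra.
  by rewrite uvec0 subrr mul0r.
set cnt := (\sum_(i < n) ((m < o i)%N : nat))%N.
have hcnt : (cnt * m.+1 <= k)%N.
  rewrite /cnt big_distrl /=; apply: leq_trans on.
  rewrite /norm1; apply: leq_sum => i _; by case: ltnP => h /=; rewrite ?mul1n ?mul0n.
have hcntR : cnt%:R * alpha <= 1.
  have h1 : (cnt%:R : R) * (m.+1)%:R <= k%:R by rewrite -natrM ler_nat.
  have h2 := m_gt k alpha.
  have h3 : (0 : R) <= cnt%:R by rewrite ler0n.
  clear -h1 h2 h3 hk.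
  nra.
have hsum : \sum_(i < n) (f (uvec i (oL i)) - f 0) <= cnt%:R * F.
  rewrite /cnt natr_sum mulr_suml; apply: ler_sum => i _; exact: hs3.
have hLF : cnt%:R * F <= F / alpha.
  rewrite ler_pdivlMr //.
  have : cnt%:R * alpha * F <= 1 * F by rewrite ler_wpM2r.
  rewrite mul1r mulrAC; exact.
have osm : forall i, (os i <= m)%N by move=> i; rewrite ffunE; case: ltnP.
have hv := ho os osm (fun i hi => ltac:(by rewrite in_nil in hi)).
have hos1 : f os <= f (vmax x os) by apply: (mono f_ge0 fDR); exact: vle_vmaxr.
have hnos : (norm1 os <= k)%N.
  apply: leq_trans on; rewrite /norm1; apply: leq_sum => i _; rewrite ffunE.
  by case: ifP.
have hq : (norm1 os)%:R * (f x / k%:R) <= f x.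
  apply: le_trans (_ : k%:R * (f x / k%:R) <= _).
    by rewrite ler_wpM2r ?ler_nat // divr_ge0 // ltW.
  by rewrite mulrC divfK // gt_eqF.
have hfo : f o <= 2%:R * f x + f y + F / alpha.
  clear -hs1 hs2 hsum hLF hv hos1 hq f00.
  lra.
set rho := (2%:R - alpha) / (1 - alpha).
have a1' : 0 < 1 - alpha by rewrite subr_gt0.
have rho0 : 0 < rho by rewrite /rho; apply: divr_gt0 => //; lra.
have hxr : f x <= rho * F.
  rewrite /rho mulrAC ler_pdivlMr // mulrC.
  apply: le_trans hx' _; rewrite ler_wpM2l //; lra.
have hyr : f y <= rho * F.
  rewrite /rho mulrAC ler_pdivlMr // mulrC.
  apply: le_trans hy' _; rewrite ler_wpM2l //; lra.
have c0 : 0 < 8%:R * rho + 1 / alpha.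
  apply: addr_gt0; first by apply: mulr_gt0; rewrite ?ltr0n.
  by apply: divr_gt0.
rewrite ler_pdivrMr // mulrDr mul1r.
have rF0 : 0 <= rho * F by rewrite mulr_ge0 // ltW.
have : F * (8%:R * rho) = 8%:R * (rho * F) by rewrite mulrCA (mulrC F).
move=> ->.
clear -hfo hxr hyr rF0.
lra.
Qed.

Lemma feas_uvec (e : 'I_n) d : (d <= k)%N -> feasible k (uvec e d).
Proof.
move=> hd; split; first by rewrite norm1_uvec.
by move=> i; rewrite uvecE; case: ifP.
Qed.

Lemma main_ok : let res := qrun f (FastDrSub n k alpha) in
  [/\ feasible k res.1,
      (forall x : vec n, feasible k x ->
         f x / (8%:R * ((2%:R - alpha) / (1 - alpha)) + 1 / alpha) <= f res.1)
    & (res.2 <= 13 * n.+1 * J)%N].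
Proof.
have -> : FastDrSub n k alpha =
  qbind (qfoldl (step1_step k alpha) None (enum 'I_n)) (fun best =>
  qbind (qfoldl (step3 k alpha) (0, 0, [::], [::]) (enum 'I_n)) (fun st =>
    let: (x, y, lx, ly) := st in
    pick_best R (trim k x lx) (trim k y ly :: match best with
                       | None => [::]
                       | Some (_, d, e) => [:: uvec e d]
                       end))) by [].
rewrite qrun_bind.
have [I1r c1] := fold1 f_ge0 fDR kpos a0 a1 (enum 'I_n) (I1_nil k f).
move: I1r c1.
case: (qrun f (qfoldl (step1_step k alpha) None (enum 'I_n))) => best cb I1r c1.
rewrite /= size_enum_ord in I1r c1.
cbv beta; rewrite qrun_bind.
have [Ir c3] := fold3 f_ge0 fDR kpos a0 a1 (enum_uniq 'I_n) (Inv_init k alpha f_ge0).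
move: Ir c3.
case: (qrun f (qfoldl (step3 k alpha) _ _)) => st cs Ir c3.
rewrite /= size_enum_ord in Ir c3.
case: st Ir => [[[x y] lx] ly] Ir.
cbv beta iota zeta delta [fst snd].
set cands := (trim k y ly :: _).
have [hz1 hz2 hz3 hz4] := pick_bestP f (trim k x lx) cands.
move: hz1 hz2 hz3 hz4.
case: (qrun f (pick_best R (trim k x lx) cands)) => z cp /= hz1 hz2 hz3 hz4.
have Ir' := Ir; case: Ir' => cx cy _ _.
have [fx _] := chain_final f_ge0 fDR kpos a0 a1 cx.
have [fy _] := chain_final f_ge0 fDR kpos a0 a1 cy.
have hcp : (cp <= 3)%N by rewrite hz4 /cands; case: (best) => [[[? ?] ?]|].
have hJ : (1 <= J)%N by [].
split.
- move: hz1; rewrite /cands; case: (best) I1r => [[[r d] e]|] I1r;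
    rewrite !inE.
    case/or3P => /eqP -> //.
    case: I1r => I1a _; have [_ hd] := I1a _ _ _ erefl.
    exact: feas_uvec.
  by case/orP => /eqP ->.
- apply: (approx Ir I1r hz2 (hz3 _ (mem_head _ _))).
  move=> r d e hbe; apply: hz3.
  by rewrite /cands hbe !inE eqxx orbT.
clear -c1 c3 hcp hJ.
nia.
Qed.

End Final.

Theorem theorem1_aux (R : realType) (alpha : R) :
  0 < alpha < 1 ->
  (exists C : nat,
     forall (n k : nat) (f : vec n -> R),
       (0 < k)%N ->
       (forall x, 0 <= f x) ->
       DR_submodular f ->
       let res := qrun f (FastDrSub n k alpha) in
       let z := res.1 in
       let queries := res.2 in
       [/\ feasible k z,
           (forall x : vec n, feasible k x ->
              f x / (8%:R * ((2%:R - alpha) / (1 - alpha)) + 1 / alpha) <= f z)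
         & (queries <= C * n.+1 * (trunc_log 2 k).+1)%N]).
Proof.
move=> /andP [a0 a1]; exists 13%N => n k f kpos f_ge0 fDR.
exact: main_ok.
Qed.

Lemma sqrt_part (R : realType) (alpha : R) :
  alpha = (2%:R * Num.sqrt 2%:R - 1) / 7%:R ->
     1 / (8%:R * ((2%:R - alpha) / (1 - alpha)) + 1 / alpha)
     = 1 / (17%:R + 4%:R * Num.sqrt 2%:R).
Proof.
set s := Num.sqrt 2%:R => ha.
have hs : s * s = 2%:R by rewrite /s -expr2 sqr_sqrtr // ler0n.
have s0 : 0 <= s by rewrite /s sqrtr_ge0.
have s1 : 1 < s by nra.
have s2 : s < 2 by nra.
have apos : 0 < alpha by rewrite ha divr_gt0 ?ltr0n //; lra.
have alt1 : alpha < 1 by rewrite ha ltr_pdivrMr ?ltr0n // mul1r; lra.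
have a0 : alpha != 0 by rewrite gt_eqF.
have a1 : 1 - alpha != 0 by rewrite subr_eq0 eq_sym lt_eqF.
have h1 : 1 / alpha = 2%:R * s + 1.
  apply: (mulfI a0); rewrite mulrC divfK //.
  rewrite ha.
  have -> : (2%:R * s - 1) / 7%:R * (2%:R * s + 1) = 1 + 4%:R / 7%:R * (s * s - 2%:R) :> R by field.
  by rewrite hs subrr mulr0 addr0.
have h2 : (2%:R - alpha) / (1 - alpha) = 2%:R + s / 4%:R.
  apply: (mulIf a1); rewrite divfK //.
  rewrite ha.
  have -> : (2%:R + s / 4%:R) * (1 - (2%:R * s - 1) / 7%:R) =
     2%:R - (2%:R * s - 1) / 7%:R - 1 / 14%:R * (s * s - 2%:R) :> R by field.
  by rewrite hs subrr mulr0 subr0.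
rewrite h1 h2; congr (1 / _); by field.
Qed.

Unset Implicit Arguments.

Theorem theorem1 (R : realType) (alpha : R) :
  0 < alpha < 1 ->
  (exists C : nat,
     forall (n k : nat) (f : vec n -> R),
       (0 < k)%N ->
       (forall x, 0 <= f x) ->
       DR_submodular f ->
       let res := qrun f (FastDrSub n k alpha) in
       let z := res.1 in
       let queries := res.2 in
       [/\ feasible k z,
           (forall x : vec n, feasible k x ->
              f x / (8%:R * ((2%:R - alpha) / (1 - alpha)) + 1 / alpha) <= f z)
         & (queries <= C * n.+1 * (trunc_log 2 k).+1)%N])
  /\
  (alpha = (2%:R * Num.sqrt 2%:R - 1) / 7%:R ->
     1 / (8%:R * ((2%:R - alpha) / (1 - alpha)) + 1 / alpha)
     = 1 / (17%:R + 4%:R * Num.sqrt 2%:R)).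
Proof.
move=> ha; split; first exact: theorem1_aux ha.
exact: sqrt_part.
Qed.
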